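(* Let $\Gamma$ be a lattice with periodic boundary conditions as below, let $\mathcal{X}$ be an artificial boundary, let $S_E\subseteq C_1(\Gamma)$ be the set of edges carrying nonzero syndrome of some bit-flip error, i.e. $S_E=\partial(F_0)$ for some set of faces $F_0$, and let $\mathcal{E}$ be the set of faces returned by Procedure P5 on input $(S_E,\mathcal{X})$. Then: (a) (Existence) there exists a set of faces $\hat{\mathcal{E}}\subseteq\mathcal{E}\cup\mathcal{X}$ with $\partial(\hat{\mathcal{E}})=S_E$; (b) (Uniqueness) if $\hat{\mathcal{E}}_1,\hat{\mathcal{E}}_2\subseteq\mathcal{E}\cup\mathcal{X}$ satisfy $\partial(\hat{\mathcal{E}}_1)=\partial(\hat{\mathcal{E}}_2)=S_E$, then $\hat{\mathcal{E}}_1\triangle\hat{\mathcal{E}}_2\subseteq\mathcal{X}$, i.e. $\hat{\mathcal{E}}_1\setminus\mathcal{X}=\hat{\mathcal{E}}_2\setminus\mathcal{X}$.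
   Context: $\Gamma$ is a finite, connected three-dimensional cell complex without boundary (periodic boundary conditions), with edges $C_1(\Gamma)$, faces $C_2(\Gamma)$, volumes $C_3(\Gamma)$; every face lies in the boundary of exactly two distinct volumes and the dual complex is connected. $\partial(f)$ is the set of boundary edges of face $f$, $\partial(\nu)$ the set of boundary faces of volume $\nu$, $\iota(e)$ the set of faces containing edge $e$; for a set of faces $F$, $\partial(F)$ is the symmetric difference of the $\partial(f)$, $f\in F$, and $\triangle$ denotes symmetric difference. The 3D toric code on $\Gamma$ has one qubit per face, stabilizer group generated by $B_e=\prod_{f\in\iota(e)}Z_f$ and $A_\nu=\prod_{f\in\partial(\nu)}X_f$, and encodes $k$ logical qubits; a logical operator is a Pauli operator commuting with all stabilizers but not in the stabilizer group (up to phase); $X_S=\prod_{f\in S}X_f$. Fix $X$-type logical operators $\bar X_1,\dots,\bar X_k$, one per logical qubit. An artificial boundary is a set $\mathcal{X}=\bigcup_{i=1}^k\mathrm{supp}(\bar X_i^r)$, where each $\bar X_i^r$ is an $X$-type operator with $\bar X_i^r\bar X_i$ an $X$-type stabilizer, such that $\mathcal{X}$ contains no nonempty set $S$ with $X_S$ a stabilizer. A face path is a sequence of faces $\rho=(f_1,\dots,f_m)$ with pairwise distinct volumes $\Lambda(\rho)=(\nu_1,\dots,\nu_{m-1})$, $f_i,f_{i+1}\in\partial(\nu_i)$. A set of faces $K$ is a cut set of $\Gamma$ if there exist volumes $\nu,\nu'$ such that every face path $\rho$ with $f_1\in\partial(\nu)$, $f_m\in\partial(\nu')$, $\nu,\nu'\notin\Lambda(\rho)$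 meets $K$. Procedure P5 (input $S_E,\mathcal{X}$): set $\mathcal{E}=\emptyset$, $B=S_E$, all faces unexplored. Repeat rounds until all faces of $C_2(\Gamma)\setminus\mathcal{X}$ are explored: set $B'=\emptyset$; for each unexplored face $f\in C_2(\Gamma)\setminus\mathcal{X}$ with $\partial(f)\cap B\ne\emptyset$, mark $f$ explored and, if $\mathcal{X}\cup\mathcal{E}\cup\{f\}$ is not a cut set of $\Gamma$, set $\mathcal{E}\leftarrow\mathcal{E}\cup\{f\}$ and $B'\leftarrow B'\cup\partial(f)$; at the end of the round set $B\leftarrow B'\setminus B$. It is assumed that the procedure terminates with every face of $C_2(\Gamma)\setminus\mathcal{X}$ explored; it returns $\mathcal{E}$ (so $\mathcal{E}\cap\mathcal{X}=\emptyset$). *)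

(* Defs.v *)
From mathcomp Require Import all_boot.
Set Implicit Arguments.
Unset Strict Implicit.
Unset Printing Implicit Defensive.

Record complex := Complex {
  Vert : finType; Edge : finType; Face : finType; Vol : finType;
  bdE : Edge -> {set Vert};
  bdF : Face -> {set Edge};
  bdV : Vol -> {set Face} }.

Definition bigsymdiff (T U : finType) (I : {set T}) (A : T -> {set U}) : {set U} :=
  [set x | odd #|[set i in I | x \in A i]|].

Definition symdiff (U : finType) (A B : {set U}) : {set U} := (A :\: B) :|: (B :\: A).

Section Complex.
Variable G : complex.

Definition bdFs (F : {set Face G}) : {set Edge G} := bigsymdiff F (@bdF G).

Definition iota (e : Edge G) : {set Face G} := [set f | e \in bdF f].

Definition primal_adj : rel (Vert G) :=
  fun x y => [exists e, (x \in bdE e) && (y \in bdE e)].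
Definition dual_adj : rel (Vol G) :=
  fun u w => [exists f, (f \in bdV u) && (f \in bdV w)].

Definition valid_complex : Prop :=
  [/\ forall f : Face G, bigsymdiff (bdF f) (@bdE G) = set0,
      forall v : Vol G, bigsymdiff (bdV v) (@bdF G) = set0,
      forall f : Face G, #|[set v : Vol G | f \in bdV v]| = 2,
      forall x y : Vert G, connect primal_adj x y
    & forall u w : Vol G, connect dual_adj u w].

(* X-type Pauli operators are represented by their support (a set of faces).
   X_S is in the stabilizer group iff it is a product of the A_nu's, i.e.
   S is the symmetric difference of the boundaries of some set of volumes. *)
Definition is_Xstab (S : {set Face G}) : Prop :=
  exists V : {set Vol G}, S = bigsymdiff V (@bdV G).

(* X_S commutes with every stabilizer: it always commutes with the A_nu, and
   commutes with B_e iff |S cap iota(e)| is even. *)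
Definition commutes_all (S : {set Face G}) : Prop :=
  forall e : Edge G, ~~ odd #|S :&: iota e|.

Definition is_logicalX (S : {set Face G}) : Prop :=
  commutes_all S /\ ~ is_Xstab S.

(* Xbar_1..Xbar_k : one X-type logical operator per logical qubit, i.e. a basis
   of the X-type logical operators modulo X-type stabilizers (k = number of
   encoded qubits). *)
Definition logical_X_basis (k : nat) (Xbar : 'I_k -> {set Face G}) : Prop :=
  [/\ forall i, is_logicalX (Xbar i),
      forall I : {set 'I_k}, is_Xstab (bigsymdiff I Xbar) -> I = set0
    & forall S, commutes_all S ->
        exists I : {set 'I_k}, is_Xstab (symdiff S (bigsymdiff I Xbar))].

Definition artificial_boundary (k : nat) (Xbar : 'I_k -> {set Face G})
    (Xb : {set Face G}) : Prop :=
  exists R : 'I_k -> {set Face G},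
    [/\ forall i, is_Xstab (symdiff (R i) (Xbar i)),
        Xb = \bigcup_(i < k) R i
      & forall S : {set Face G}, S \subset Xb -> S != set0 -> ~ is_Xstab S].

(* Face paths: rho = (f1, f2, ..., fm) with volumes Lambda = (nu1, ..., nu_{m-1});
   encoded as f1 and the list of steps (nu_i, f_{i+1}). *)
Fixpoint fpath (f : Face G) (steps : seq (Vol G * Face G)) : bool :=
  match steps with
  | [::] => true
  | (v, g) :: st => [&& f \in bdV v, g \in bdV v & fpath g st]
  end.

Definition cutset (K : {set Face G}) : Prop :=
  exists nu nu' : Vol G,
    forall (f1 : Face G) (steps : seq (Vol G * Face G)),
      fpath f1 steps -> uniq (map fst steps) ->
      f1 \in bdV nu -> last f1 (map snd steps) \in bdV nu' ->
      nu \notin map fst steps -> nu' \notin map fst steps ->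
      (f1 \in K) || has (mem K) (map snd steps).

Record p5state := P5State {
  st_expl : {set Face G}; st_E : {set Face G}; st_B : {set Edge G} }.

(* Processing, in order, the faces of a round: proc_rel Xb s E B' E2 B2 means
   that starting with current E and B', processing the sequence s yields E2, B2. *)
Inductive proc_rel (Xb : {set Face G}) :
  seq (Face G) -> {set Face G} -> {set Edge G} -> {set Face G} -> {set Edge G} -> Prop :=
| proc_nil E B' : proc_rel Xb [::] E B' E B'
| proc_add f s E B' E2 B2 :
    ~ cutset (Xb :|: E :|: [set f]) ->
    proc_rel Xb s (E :|: [set f]) (B' :|: bdF f) E2 B2 ->
    proc_rel Xb (f :: s) E B' E2 B2
| proc_skip f s E B' E2 B2 :
    cutset (Xb :|: E :|: [set f]) ->
    proc_rel Xb s E B' E2 B2 ->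
    proc_rel Xb (f :: s) E B' E2 B2.

Definition p5_candidate (Xb : {set Face G}) (st : p5state) (f : Face G) : bool :=
  [&& f \notin Xb, f \notin st_expl st & bdF f :&: st_B st != set0].

(* One round, processing the candidate faces in an arbitrary order s. *)
Definition p5_round (Xb : {set Face G}) (st st' : p5state) : Prop :=
  exists s : seq (Face G),
    [/\ uniq s, forall f, (f \in s) = p5_candidate Xb st f &
      exists E2 B2, proc_rel Xb s (st_E st) set0 E2 B2 /\
        st' = P5State (st_expl st :|: [set f in s]) E2 (B2 :\: st_B st)].

Definition p5_finished (Xb : {set Face G}) (st : p5state) : bool :=
  ~: Xb \subset st_expl st.

Inductive p5_run (Xb : {set Face G}) : p5state -> {set Face G} -> Prop :=
| p5_done st : p5_finished Xb st -> p5_run Xb st (st_E st)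
| p5_step st st' E : ~~ p5_finished Xb st -> p5_round Xb st st' ->
    p5_run Xb st' E -> p5_run Xb st E.

(* P5 on input (S_E, Xb) terminates (with all faces outside Xb explored)
   and returns E. *)
Definition P5_returns (SE : {set Edge G}) (Xb : {set Face G}) (E : {set Face G}) : Prop :=
  p5_run Xb (P5State set0 set0 SE) E.

End Complex.

(* Main.v *)
Require Import Defs.
From mathcomp Require Import all_boot.
Set Implicit Arguments. Unset Strict Implicit. Unset Printing Implicit Defensive.

Lemma in_symdiff (U : finType) (A B : {set U}) x :
  (x \in symdiff A B) = (x \in A) (+) (x \in B).
Proof. by rewrite /symdiff !inE; case: (x \in A); case: (x \in B). Qed.

Lemma odd_sum_odd (I : finType) (P : pred I) (F : I -> nat) :
  odd (\sum_(i | P i) F i) = odd (\sum_(i | P i) odd (F i)).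
Proof.
apply: (big_ind2 (fun a b => odd a = odd b)) => //.
  by move=> a b c d h1 h2; rewrite !oddD h1 h2.
by move=> i _; rewrite oddb.
Qed.

Lemma card_setP (T : finType) (P Q : pred T) :
  #|[set u | P u & Q u]| = \sum_(u | P u) Q u.
Proof.
rewrite -sum1_card (eq_bigl (fun u => P u && Q u)); last by move=> u; rewrite inE.
rewrite big_mkcondr; apply: eq_bigr => u _; by case: (Q u).
Qed.

Lemma card_setI (T : finType) (A B : {set T}) :
  #|A :&: B| = \sum_(u in B) (u \in A).
Proof.
rewrite -card_setP; apply: eq_card => u; by rewrite !inE andbC.
Qed.

Lemma mem_bigsymdiff (T U : finType) (I : {set T}) (A : T -> {set U}) x :
  (x \in bigsymdiff I A) = odd (\sum_(i in I) (x \in A i)).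
Proof. by rewrite inE -card_setP. Qed.

Lemma odd_symdiffI (U : finType) (X Y B : {set U}) :
  odd #|symdiff X Y :&: B| = odd #|X :&: B| (+) odd #|Y :&: B|.
Proof.
rewrite !card_setI -oddD -big_split /= odd_sum_odd [RHS]odd_sum_odd.
congr odd; apply: eq_bigr => u _; by rewrite in_symdiff oddD !oddb.
Qed.

Lemma odd_bigsymdiffI (T U : finType) (I : {set T}) (A : T -> {set U}) (B : {set U}) :
  odd #|bigsymdiff I A :&: B| = odd (\sum_(i in I) #|A i :&: B|).
Proof.
rewrite card_setI.
rewrite (eq_bigr (fun u => nat_of_bool (odd (\sum_(i in I) (u \in A i))))); last first.
  by move=> u _; rewrite mem_bigsymdiff.
rewrite -odd_sum_odd exchange_big /=.
congr odd; apply: eq_bigr => i _; by rewrite card_setI.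
Qed.

Definition delta (G : complex) (V : {set Vol G}) := bigsymdiff V (@bdV G).

Lemma two_vols (G : complex) (h3 : forall f : Face G, #|[set v : Vol G | f \in bdV v]| = 2)
  (f : Face G) a b : f \in bdV a -> f \in bdV b -> a != b ->
  [set v | f \in bdV v] = [set a; b].
Proof.
move=> ha hb ab; apply/eqP; rewrite eq_sym eqEcard; apply/andP; split.
  by apply/subsetP => x; rewrite !inE => /orP [/eqP->|/eqP->].
by rewrite h3 cards2 ab.
Qed.

Lemma odd_card1I (U : finType) (a : U) (V : {set U}) : odd #|[set a] :&: V| = (a \in V).
Proof.
case: (boolP (a \in V)) => h.
  by rewrite (setIidPl _) ?cards1 // sub1set.
have ->: [set a] :&: V = set0.
  apply/setP => x; rewrite !inE; case: eqP => // ->; by rewrite (negbTE h).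
by rewrite cards0.
Qed.

Lemma in_delta (G : complex) (h3 : forall f : Face G, #|[set v : Vol G | f \in bdV v]| = 2)
  (V : {set Vol G}) (f : Face G) a b : f \in bdV a -> f \in bdV b -> a != b ->
  (f \in delta V) = (a \in V) (+) (b \in V).
Proof.
move=> ha hb ab; rewrite inE.
have ->: [set v in V | f \in bdV v] = symdiff [set a] [set b] :&: V.
  apply/setP => x; rewrite in_setI in_symdiff !inE andbC.
  have := two_vols h3 ha hb ab => /setP /(_ x); rewrite !inE => ->.
  case: (x =P a) => [->|//]; by rewrite (negbTE ab).
by rewrite odd_symdiffI !odd_card1I.
Qed.

Lemma two_vols_ex (G : complex) (h3 : forall f : Face G, #|[set v : Vol G | f \in bdV v]| = 2)
  (f : Face G) : exists a b, [/\ f \in bdV a, f \in bdV b & a != b].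
Proof.
have /cards2P [a [b [ab e]]] : #|[set v : Vol G | f \in bdV v]| == 2 by rewrite h3.
exists a, b; split => //.
  by have := e => /setP /(_ a); rewrite !inE eqxx /= => ->.
by have := e => /setP /(_ b); rewrite !inE eqxx orbT => ->.
Qed.

Lemma in_bdFs (G : complex) (S : {set Face G}) e :
  (e \in bdFs S) = odd #|S :&: Defs.iota e|.
Proof. rewrite /bdFs inE; apply: congr1; apply: eq_card => x; by rewrite !inE. Qed.

Lemma bdFs_symdiff (G : complex) (X Y : {set Face G}) :
  bdFs (symdiff X Y) = symdiff (bdFs X) (bdFs Y).
Proof. apply/setP => e; by rewrite in_symdiff !in_bdFs odd_symdiffI. Qed.

Lemma bdFs_delta (G : complex) (h2 : forall v : Vol G, bigsymdiff (bdV v) (@bdF G) = set0)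
  (V : {set Vol G}) : bdFs (delta V) = set0.
Proof.
apply/setP => e; rewrite in_bdFs odd_bigsymdiffI inE.
apply/negbTE; apply: (big_ind (fun n => ~~ odd n)) => //.
  by move=> x y hx hy; rewrite oddD (negbTE hx) (negbTE hy).
move=> v _; have := h2 v => /setP /(_ e); rewrite inE in_set0.
have hE : [set x in bdV v | e \in bdF x] = bdV v :&: Defs.iota e.
  by apply/setP => x; rewrite !inE.
by rewrite hE => ->.
Qed.

Lemma delta_symdiff (G : complex) (V W : {set Vol G}) :
  symdiff (delta V) (delta W) = delta (symdiff V W).
Proof.
apply/setP => f; rewrite in_symdiff !inE.
have E (X : {set Vol G}) : [set v in X | f \in bdV v] = X :&: [set v | f \in bdV v].
  by apply/setP => x; rewrite !inE.
by rewrite !E odd_symdiffI.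
Qed.

Lemma cutset_mono (G : complex) (K K' : {set Face G}) :
  cutset K -> K \subset K' -> cutset K'.
Proof.
move=> [nu [nu' H]] sub; exists nu, nu' => f1 steps h1 h2 h3 h4 h5 h6.
case/orP: (H f1 steps h1 h2 h3 h4 h5 h6) => [h|h]; apply/orP.
  by left; apply: (subsetP sub).
right; apply: sub_has h => x /=; exact: (subsetP sub).
Qed.

Lemma cross (G : complex) (h3 : forall f : Face G, #|[set v : Vol G | f \in bdV v]| = 2)
  (V : {set Vol G}) b : b \notin V ->
  forall steps f1 a, a \in V -> f1 \in bdV a -> Defs.fpath f1 steps ->
  uniq (map fst steps) -> a \notin map fst steps -> b \notin map fst steps ->
  last f1 (map snd steps) \in bdV b ->
  (f1 \in delta V) || has (mem (delta V)) (map snd steps).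
Proof.
move=> bV; elim=> [|[v g] st IH] f1 a aV fa /=.
  move=> _ _ _ _ fb.
  have ab : a != b by apply/negP => /eqP e; rewrite -e aV in bV.
  by rewrite (in_delta h3 V fa fb ab) aV (negbTE bV).
case/and3P => fv gv hp /andP [vst ust].
rewrite !in_cons !negb_or => /andP [av ast] /andP [bv bst] hl.
case: (boolP (v \in V)) => vV.
  by case/orP: (IH g v vV gv hp ust vst bst hl) => h; rewrite /= h ?orbT.
by rewrite (in_delta h3 V fa fv av) aV (negbTE vV).
Qed.

Lemma stab_cut (G : complex) (h3 : forall f : Face G, #|[set v : Vol G | f \in bdV v]| = 2)
  (V : {set Vol G}) (K : {set Face G}) :
  delta V \subset K -> delta V != set0 -> cutset K.
Proof.
move=> sub /set0Pn [f hf].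
have [a [b [fa fb ab]]] := two_vols_ex h3 f.
have hab := hf; rewrite (in_delta h3 V fa fb ab) in hab.
apply: (cutset_mono _ sub).
wlog aV : a b fa fb ab hab / a \in V.
  move=> W; case: (boolP (a \in V)) => h; first exact: (W a b).
  apply: (W b a) => //; first by rewrite eq_sym.
    by rewrite addbC.
  by move: hab; rewrite (negbTE h).
have bV : b \notin V by move: hab; rewrite aV.
exists a, b => f1 steps hp hu h1 h2 h4 h5.
exact: (cross h3 bV aV h1 hp hu h4 h5 h2).
Qed.

Lemma delta_nonempty (G : complex) (h3 : forall f : Face G, #|[set v : Vol G | f \in bdV v]| = 2)
  (h5 : forall u w : Vol G, connect (@dual_adj G) u w)
  (V : {set Vol G}) u w : u \in V -> w \notin V -> delta V != set0.
Proof.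
move=> uV wV; apply/negP => /eqP h0.
have cl : closed (@dual_adj G) V.
  move=> x y /existsP [f /andP [fx fy]].
  case: (x =P y) => [->//|/eqP xy].
  have := in_delta h3 V fx fy xy; rewrite h0 in_set0.
  by case: (x \in V); case: (y \in V).
have := closed_connect cl (h5 u w); by rewrite uV (negbTE wV).
Qed.

Lemma build (G : complex) (K : {set Face G}) (r : rel (Vol G))
  (hr : forall u w, r u w -> exists f, [/\ f \notin K, f \in bdV u & f \in bdV w]) :
  forall q x w, path r x (w :: q) -> exists f1 steps,
   [/\ Defs.fpath f1 steps, map fst steps = belast w q, f1 \in bdV x,
       last f1 (map snd steps) \in bdV (last w q) &
       (f1 \notin K) && all (fun g => g \notin K) (map snd steps)].
Proof.
elim=> [|w' q IH] x w /=.
  rewrite andbT => /hr [f [fK fx fw]]; by exists f, [::]; split; rewrite /= ?fK.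
case/andP => rxw hp.
have [f1 [steps [hp' hm h1 hl ha]]] := IH w w' hp.
have [f [fK fx fw]] := hr _ _ rxw.
exists f, ((w, f1) :: steps); split => //=.
- by rewrite fw h1 hp'.
- by rewrite hm.
- by rewrite fK.
Qed.

Lemma cut_stab (G : complex) (h3 : forall f : Face G, #|[set v : Vol G | f \in bdV v]| = 2)
  (h5 : forall u w : Vol G, connect (@dual_adj G) u w)
  (t : Face G) (K : {set Face G}) :
  cutset K -> exists V, delta V \subset K /\ delta V != set0.
Proof.
case=> nu [nu' H].
case: (nu =P nu') => [enu | /eqP nn].
  subst nu'; exists [set nu]; split.
    apply/subsetP => f hf.
    have [a [b [fa fb ab]]] := two_vols_ex h3 f.
    rewrite (in_delta h3 _ fa fb ab) !inE in hf.
    have fnu : f \in bdV nu.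
      move: hf; case: (a =P nu) => [<-//|_]; by case: (b =P nu) => [<-|].
    by have := H f [::] isT isT fnu fnu isT isT; rewrite orbF.
  have [a [b [fa fb ab]]] := two_vols_ex h3 t.
  case: (a =P nu) => [ea|/eqP na].
    apply: (delta_nonempty h3 h5 (u := nu) (w := b)); first by rewrite inE.
    by rewrite inE -ea eq_sym.
  by apply: (delta_nonempty h3 h5 (u := nu) (w := a)); rewrite inE // eq_sym.
pose r := fun u w => [exists f, [&& f \notin K, f \in bdV u & f \in bdV w]].
have hr : forall u w, r u w -> exists f, [/\ f \notin K, f \in bdV u & f \in bdV w].
  by move=> u w /existsP [f /and3P [? ? ?]]; exists f.
pose V := [set w | connect r nu w].
exists V; split.
  apply/subsetP => f hf.
  have [a [b [fa fb ab]]] := two_vols_ex h3 f.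
  rewrite (in_delta h3 _ fa fb ab) in hf.
  case: (boolP (f \in K)) => // fK.
  have eab : (a \in V) = (b \in V).
    rewrite !inE; apply/idP/idP => h; apply: (connect_trans h (connect1 _));
    apply/existsP; exists f; by rewrite fK ?fa ?fb.
  by rewrite eab addbb in hf.
apply: (delta_nonempty h3 h5 (u := nu) (w := nu')); first by rewrite inE connect0.
rewrite inE; apply/negP => /connectP [p hp hl].
move: hl; case: (shortenP hp) => p' hp' hu _ hl.
case: p' hp' hu hl => [|w q] hp' hu hl.
  by rewrite hl eqxx in nn.
have [f1 [steps [hfp hm h1 hlast ha]]] := build hr hp'.
have hu2 : uniq (w :: q) by case/andP: hu.
have hnu : nu \notin w :: q by case/andP: hu.
move: hu2; rewrite (lastI w q) rcons_uniq => /andP [hlq hub].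
have {}hl : nu' = last w q by rewrite hl.
have hnb : nu \notin belast w q.
  apply/negP => /mem_belast; by apply/negP.
have := H f1 steps hfp; rewrite hm hl => /(_ hub h1 hlast hnb hlq).
case/andP: ha => f1K hall.
case/orP => [h|/hasP [g hg gK]]; first by rewrite h in f1K.
by have /negP := allP hall g hg; apply.
Qed.

Definition noStab (G : complex) (K : {set Face G}) :=
  forall S : {set Face G}, S \subset K -> S != set0 -> ~ is_Xstab S.

Lemma noStab_of_notcut (G : complex) (h3 : forall f : Face G, #|[set v : Vol G | f \in bdV v]| = 2)
  (K : {set Face G}) : ~ cutset K -> noStab K.
Proof.
move=> nc S sub ne [V eV]; apply: nc; apply: (stab_cut h3 (V := V)); by rewrite /delta -eV.
Qed.

Lemma proc_inv (G : complex) (h3 : forall f : Face G, #|[set v : Vol G | f \in bdV v]| = 2)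
  (Xb : {set Face G}) s E0 B E2 B2 : proc_rel Xb s E0 B E2 B2 ->
  [/\ E0 \subset E2, noStab (Xb :|: E0) -> noStab (Xb :|: E2) &
      forall f, f \in s -> f \in E2 \/ cutset (Xb :|: E2 :|: [set f])].
Proof.
elim=> {s E0 B E2 B2}.
- by move=> E B'; split.
- move=> f s E B' E2 B2 nc _ [IH1 IH2 IH3]; split.
  + exact: subset_trans (subsetUl _ _) IH1.
  + move=> _; apply: IH2; rewrite setUA; exact: noStab_of_notcut.
  + move=> g; rewrite in_cons => /orP [/eqP -> | hg]; last exact: IH3.
    by left; apply: (subsetP IH1); rewrite !inE eqxx orbT.
- move=> f s E B' E2 B2 c _ [IH1 IH2 IH3]; split => //.
  move=> g; rewrite in_cons => /orP [/eqP -> | hg]; last exact: IH3.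
  right; apply: (cutset_mono c); exact: setSU (setUS _ IH1).
Qed.

Lemma run_inv (G : complex) (h3 : forall f : Face G, #|[set v : Vol G | f \in bdV v]| = 2)
  (Xb : {set Face G}) st E : p5_run Xb st E -> noStab (Xb :|: st_E st) ->
  (forall f, f \in st_expl st -> f \notin Xb -> f \in st_E st \/ cutset (Xb :|: st_E st :|: [set f])) ->
  noStab (Xb :|: E) /\ (forall f, f \notin Xb -> f \in E \/ cutset (Xb :|: E :|: [set f])).
Proof.
elim=> {st E}.
  move=> st fin ns hx; split => // f fX; apply: hx => //.
  by apply: (subsetP fin); rewrite inE.
move=> st st' E _ [s [us ms [E2 [B2 [hproc ->]]]]] _ IH ns hx; apply: IH => /=.
  by have [_ s2 _] := proc_inv h3 hproc; exact: s2.
have [s1 _ s3] := proc_inv h3 hproc.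
move=> f; rewrite inE => /orP [hf | hf] fX.
  case: (hx f hf fX) => [h|h]; first by left; exact: (subsetP s1).
  right; apply: (cutset_mono h); exact: setSU (setUS _ s1).
by apply: s3; rewrite inE in hf.
Qed.

Lemma symdiff0r (U : finType) (A : {set U}) : symdiff A set0 = A.
Proof. by apply/setP => x; rewrite in_symdiff in_set0 addbF. Qed.

Theorem theorem2 (G : complex) (HG : valid_complex G)
  (k : nat) (Xbar : 'I_k -> {set Face G}) (Hbasis : logical_X_basis Xbar)
  (Xb : {set Face G}) (HXb : artificial_boundary Xbar Xb)
  (F0 : {set Face G}) (E : {set Face G})
  (HE : P5_returns (bdFs F0) Xb E) :
  (exists Eh : {set Face G}, Eh \subset E :|: Xb /\ bdFs Eh = bdFs F0) /\
  (forall E1 E2 : {set Face G},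
     E1 \subset E :|: Xb -> E2 \subset E :|: Xb ->
     bdFs E1 = bdFs F0 -> bdFs E2 = bdFs F0 ->
     symdiff E1 E2 \subset Xb).
Proof.
have [h1 h2 h3 h4 h5] := HG.
have [R [hRX hXbU hnoX]] := HXb.
have [ns hmax] : noStab (Xb :|: E) /\
    (forall f, f \notin Xb -> f \in E \/ cutset (Xb :|: E :|: [set f])).
  apply: (run_inv h3 HE) => /=; last by move=> f; rewrite inE.
  by rewrite setU0; exact: hnoX.
have {ns}ns : noStab (E :|: Xb) by rewrite setUC; apply: ns.
split.
  suff: forall n F, #|F :\: (E :|: Xb)| <= n ->
      exists Eh : {set Face G}, Eh \subset E :|: Xb /\ bdFs Eh = bdFs F by apply.
  elim=> [|n IH] F hn.
    exists F; split => //; rewrite -setD_eq0 -cards_eq0; by rewrite leqn0 in hn.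
  case: (set_0Vmem (F :\: (E :|: Xb))) => [e0 | [t ht]].
    by exists F; split => //; rewrite -setD_eq0 e0.
  move: (ht); rewrite !inE negb_or => /andP [/andP [tE tX] tF].
  have hc : cutset (Xb :|: E :|: [set t]).
    by case: (hmax t tX) => // h; rewrite h in tE.
  have [V [sub ne]] := cut_stab h3 h5 t hc.
  have tV : t \in delta V.
    apply/negPn/negP => tV; apply: (ns (delta V)) ne _; last by exists V.
    apply/subsetP => x hx; have := subsetP sub x hx; rewrite !inE.
    case: (x =P t) => [ex|_]; last by rewrite orbF orbC.
    by rewrite -ex hx in tV.
  pose F' := symdiff F (delta V).
  have hlt : #|F' :\: (E :|: Xb)| <= n.
    rewrite -ltnS; apply: leq_trans hn; apply: proper_card; apply/properP; split.
      apply/subsetP => x; rewrite in_setD /F' in_symdiff => /andP [xM].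
      case: (boolP (x \in delta V)) => xd; last by rewrite addbF in_setD xM.
      have := subsetP sub x xd; move: xM; rewrite !inE; case: (x =P t) => [->|_].
        by rewrite tF.
      by case: (x \in Xb); case: (x \in E).
    exists t => //; by rewrite in_setD /F' in_symdiff tF tV andbF.
  have [Eh [s1 s2]] := IH F' hlt.
  exists Eh; split => //; by rewrite s2 /F' bdFs_symdiff bdFs_delta // symdiff0r.
have [_ _ hspan] := Hbasis.
move=> E1 E2 s1 s2 b1 b2.
set S := symdiff E1 E2.
have bS : bdFs S = set0.
  by rewrite bdFs_symdiff b1 b2; apply/setP => x; rewrite in_symdiff addbb in_set0.
have cS : commutes_all S.
  move=> e; have := in_bdFs S e; rewrite bS in_set0 => <-; done.
have [I [V0 eV0]] := hspan S cS.
have [Vf hVf] := fin_all_exists hRX.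
set Q := bigsymdiff I R.
have QX : Q \subset Xb.
  apply/subsetP => x; rewrite mem_bigsymdiff hXbU => hx; apply/bigcupP.
  case: (pickP (fun i => (i \in I) && (x \in R i))) => [i /andP [_ hi] | h].
    by exists i.
  move: hx; rewrite big1 // => i iI; have := h i; by rewrite iI /= => ->.
have eQ : symdiff Q (bigsymdiff I Xbar) = delta (bigsymdiff I Vf).
  apply/setP => f.
  have -> : (f \in delta (bigsymdiff I Vf)) =
      odd (\sum_(i in I) odd #|Vf i :&: [set v | f \in bdV v]|).
    rewrite inE (_ : [set v in _ | _] = bigsymdiff I Vf :&: [set v | f \in bdV v]); last first.
      by apply/setP => v; rewrite !inE.
    by rewrite odd_bigsymdiffI odd_sum_odd.
  rewrite in_symdiff !mem_bigsymdiff -oddD -big_split /= odd_sum_odd.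
  congr odd; apply: eq_bigr => j _.

  have := hVf j => /setP /(_ f); rewrite in_symdiff inE => e.
  rewrite oddD !oddb e; congr odd; apply: eq_card => v; by rewrite !inE.
have eSQ : symdiff S Q = delta (symdiff V0 (bigsymdiff I Vf)).
  rewrite -delta_symdiff -eQ /delta -eV0; apply/setP => y; rewrite !in_symdiff.
  by case: (y \in E1); case: (y \in E2); case: (y \in Q); case: (y \in bigsymdiff I Xbar).
have SM : S \subset E :|: Xb.
  apply/subsetP => x; rewrite in_symdiff; case: (boolP (x \in E1)) => h /=.
    by move=> _; apply: (subsetP s1).
  by move=> h'; apply: (subsetP s2).
have e0 : symdiff S Q = set0.
  apply/eqP; apply/negPn/negP => ne; apply: (ns (symdiff S Q)) ne _; last first.
    by exists (symdiff V0 (bigsymdiff I Vf)).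
  apply/subsetP => x; rewrite in_symdiff; case: (boolP (x \in S)) => hs /= hq.
    exact: (subsetP SM).
  have := subsetP QX x hq; rewrite !inE => ->; by rewrite orbT.
apply/subsetP => x hx; have := in_symdiff S Q x.
rewrite e0 in_set0 hx; case: (boolP (x \in Q)) => // hq _.
exact: (subsetP QX).
Qed.
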